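(* Let $A$ be a Boolean algebra and $g\colon A^2\to A$ a binary sufficiency operator satisfying (ABTW): for all $a\in A$, $a\neq0\Rightarrow g(a,a)\leq a$. Let $a,b\in A$. If $g(a,b)\neq0$, then $a\cdot b\leq g(a,b)$. If, additionally, $a\cdot b\neq0$, then $g(a,b)=a\cdot b$ and $a\cdot b$ is an atom of $A$.
   Context: $A$ is a Boolean algebra with at least two elements (operations $+,\cdot,-,0,1$). A binary sufficiency operator is a map $g\colon A^2\to A$ with $g(x,y)=1$ whenever $x=0$ or $y=0$, and co-additive in each argument: $g(x+x',y)=g(x,y)\cdot g(x',y)$ and $g(x,y+y')=g(x,y)\cdot g(x,y')$ (hence $g$ is antitone in each argument). *)

(* Defs.v *)
From mathcomp Require Import all_boot all_order.
Set Implicit Arguments. Unset Strict Implicit. Unset Printing Implicit Defensive.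
Import Order.TTheory.
Local Open Scope order_scope.

(* A Boolean algebra is modelled by a complemented distributive lattice with
   top and bottom (ctbDistrLatticeType): + is `|`, . is `&`, - is ~`,
   0 is \bot, 1 is \top, <= is the lattice order. *)

Definition sufficiency_op (d : Order.disp_t) (A : ctbDistrLatticeType d)
  (g : A -> A -> A) : Prop :=
  (forall y : A, g \bot y = \top) /\
  (forall x : A, g x \bot = \top) /\
  (forall x x' y : A, g (x `|` x') y = g x y `&` g x' y) /\
  (forall x y y' : A, g x (y `|` y') = g x y `&` g x y').

Definition ABTW (d : Order.disp_t) (A : ctbDistrLatticeType d)
  (g : A -> A -> A) : Prop :=
  forall a : A, a != \bot -> g a a <= a.

Definition atom (d : Order.disp_t) (A : ctbDistrLatticeType d) (x : A) : Prop :=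
  x != \bot /\ (forall y : A, y <= x -> y = \bot \/ y = x).

(* Main.v *)
Require Import Defs.
From mathcomp Require Import all_boot all_order.
Import Order.TTheory Order.Theory.
Local Open Scope order_scope.

Lemma anti_l {d} {A : ctbDistrLatticeType d} {g : A -> A -> A} :
  sufficiency_op g -> forall x x' y, x <= x' -> g x' y <= g x y.
Proof.
move=> [_ [_ [h _]]] x x' y le; rewrite -(join_r le) h; exact: leIl.
Qed.

Lemma anti_r {d} {A : ctbDistrLatticeType d} {g : A -> A -> A} :
  sufficiency_op g -> forall x y y', y <= y' -> g x y' <= g x y.
Proof.
move=> [_ [_ [_ h]]] x y y' le; rewrite -(join_r le) h; exact: leIl.
Qed.

Lemma anti2 {d} {A : ctbDistrLatticeType d} {g : A -> A -> A} :
  sufficiency_op g -> forall x y x' y', x <= x' -> y <= y' -> g x' y' <= g x y.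
Proof.
move=> hg x y x' y' h1 h2; exact: le_trans (anti_l hg x x' y' h1) (anti_r hg x y y' h2).
Qed.

Theorem theorem32 (d : Order.disp_t) (A : ctbDistrLatticeType d)
  (nontriv : (\bot : A) != \top)
  (g : A -> A -> A) (hg : sufficiency_op g) (habtw : ABTW g) (a b : A) :
  g a b != \bot ->
  (a `&` b <= g a b) /\
  (a `&` b != \bot -> g a b = a `&` b /\ atom (a `&` b)).
Proof.
move=> gnz.
have part1 : a `&` b <= g a b.
  rewrite -[g a b]complK -disj_leC; apply/negPn/negP => xnz.
  set x := a `&` b `&` ~` g a b in xnz.
  have xa : x <= a := le_trans (leIl _ _) (leIl _ _).
  have xb : x <= b := le_trans (leIl _ _) (leIr _ _).
  have h := habtw x xnz.
  have h2 : g a b <= x := le_trans (anti2 hg _ _ _ _ xa xb) h.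
  have h3 : g a b <= ~` g a b := le_trans h2 (leIr _ _).
  move: h3; rewrite -disj_leC meetxx => /eqP; by move: gnz => /eqP.
split=> // abnz.
have ga : g a b <= a `&` b.
  apply: le_trans (habtw _ abnz); apply: anti2 => //; [exact: leIl | exact: leIr].
split; first by apply/eqP; rewrite eq_le ga part1.
split=> // y le_y.
case: (eqVneq y \bot) => [->|ynz]; [by left | right].
apply/eqP; rewrite eq_le le_y /=.
apply: le_trans part1 _; apply: le_trans (habtw _ ynz).
apply: anti2 => //; apply: le_trans le_y _; [exact: leIl | exact: leIr].
Qed.
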